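(* Let $\mathcal{G}=(V,L)$ be a finite connected undirected graph with monitor set $M$ and non-monitor set $N=V\setminus M$, $\sigma=|N|$, and let $P$ be a given set of measurement paths between monitors (Uncontrollable Probing). For $1\le k\le\sigma-1$ let $S^{\mathrm{outer}}(k):=\{v\in N:\mathrm{MSC}(v)\ge k\}$ and $S^{\mathrm{inner}}(k):=\{v\in N:\mathrm{MSC}(v)\ge k+1\}$, and let $S^*_{\mathrm{UP}}(k)$ be the maximum-cardinality $k$-identifiable subset of $N$. Then $S^{\mathrm{inner}}(k)\subseteq S^*_{\mathrm{UP}}(k)\subseteq S^{\mathrm{outer}}(k)$.
   Context: A failure set is any $F\subseteq N$; a path fails iff it traverses a node of $F$. $P_F$ is the set of paths in $P$ traversing a node of $F$; $F_1,F_2$ distinguishable iff $P_{F_1}\ne P_{F_2}$. $S\subseteq N$ is $k$-identifiable if any two failure sets $F_1,F_2$ with $|F_1|,|F_2|\le k$ and $F_1\cap S\ne F_2\cap S$ are distinguishable; the maximum-cardinality $k$-identifiable subset of $N$ is unique. For $v\in N$, $P_v$ is the set of paths in $P$ traversing $v$. $\mathrm{MSC}(v)$ is the minimum cardinality of a set $V'\subseteq N\setminus\{v\}$ with $P_v\subseteq\bigcup_{w\in V'}P_w$; if no such $V'$ exists (e.g. when $v$ lies on a two-hop measurement path monitor–$v$–monitor), $\mathrm{MSC}(v):=\sigma$. *)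

(* Defs.v *)
From mathcomp Require Import all_boot.
Set Implicit Arguments. Unset Strict Implicit. Unset Printing Implicit Defensive.

Definition undirected_graph (V : finType) (e : rel V) : Prop :=
  symmetric e /\ irreflexive e.

Definition connected_graph (V : finType) (e : rel V) : Prop :=
  forall x y : V, connect e x y.

Definition nonmon (V : finType) (M : {set V}) : {set V} := ~: M.

Definition measurement_path (V : finType) (e : rel V) (M : {set V})
  (p : seq V) : Prop :=
  exists x q, p = x :: q /\ path e x q /\ uniq p /\
    x \in M /\ last x q \in M /\ last x q != x.

(* P_F: the paths of P traversing a node of F (order inherited from P). *)
Definition paths_through (V : finType) (P : seq (seq V)) (F : {set V}) :
  seq (seq V) := [seq p <- P | has (fun x => x \in F) p].

Definition distinguishable (V : finType) (P : seq (seq V)) (F1 F2 : {set V}) :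
  Prop := paths_through P F1 <> paths_through P F2.

Definition k_identifiable (V : finType) (M : {set V}) (P : seq (seq V))
  (k : nat) (S : {set V}) : Prop :=
  forall F1 F2 : {set V},
    F1 \subset nonmon M -> F2 \subset nonmon M ->
    #|F1| <= k -> #|F2| <= k ->
    F1 :&: S != F2 :&: S -> distinguishable P F1 F2.

Definition max_k_identifiable (V : finType) (M : {set V}) (P : seq (seq V))
  (k : nat) (S : {set V}) : Prop :=
  S \subset nonmon M /\ k_identifiable M P k S /\
  forall S' : {set V}, S' \subset nonmon M -> k_identifiable M P k S' ->
    #|S'| <= #|S|.

Definition msc_cover (V : finType) (M : {set V}) (P : seq (seq V))
  (v : V) (V' : {set V}) : bool :=
  (V' \subset nonmon M :\ v) &&
  all (fun p => (v \in p) ==> has (fun w => w \in V') p) P.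

(* MSC(v): minimum cardinality of a cover, or sigma = |N| if none exists
   (every cover has size <= sigma - 1 < sigma, so this is the minimum). *)
Definition MSC (V : finType) (M : {set V}) (P : seq (seq V)) (v : V) : nat :=
  \big[minn/#|nonmon M|]_(V' : {set V} | msc_cover M P v V') #|V'|.

Definition S_outer (V : finType) (M : {set V}) (P : seq (seq V)) (k : nat)
  : {set V} := [set v in nonmon M | k <= MSC M P v].

Definition S_inner (V : finType) (M : {set V}) (P : seq (seq V)) (k : nat)
  : {set V} := [set v in nonmon M | k.+1 <= MSC M P v].

(* Main.v *)
Require Import Defs.
From mathcomp Require Import all_boot.

Lemma MSC_le (V : finType) (M : {set V}) (P : seq (seq V)) v V' :
  msc_cover M P v V' -> MSC M P v <= #|V'|.
Proof.
move=> H; rewrite /MSC.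
have : V' \in index_enum {set V} by rewrite mem_index_enum.
elim: (index_enum _) => // a s IH; rewrite big_cons inE.
case/orP => [/eqP <-|/IH h]; first by rewrite H geq_minl.
case: ifP => _ //; exact: leq_trans (geq_minr _ _) h.
Qed.

Lemma MSC_attained (V : finType) (M : {set V}) (P : seq (seq V)) v :
  MSC M P v < #|nonmon M| ->
  exists V', msc_cover M P v V' /\ #|V'| = MSC M P v.
Proof.
rewrite /MSC.
pose Q := fun x => x = #|nonmon M| \/
  exists V', msc_cover M P v V' /\ #|V'| = x.
have : Q (\big[minn/#|nonmon M|]_(V' : {set V} | msc_cover M P v V') #|V'|).
  apply: (big_ind Q); first by left.
  - move=> x y Hx Hy; rewrite /minn; by case: ifP.
  - move=> V' HV'; right; by exists V'.
case=> [->|//]; by rewrite ltnn.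
Qed.

Lemma cover_of (V : finType) (M : {set V}) (P : seq (seq V)) v (F1 F2 : {set V}) :
  v \in nonmon M -> F2 \subset nonmon M -> v \in F1 -> v \notin F2 ->
  paths_through P F1 = paths_through P F2 -> msc_cover M P v F2.
Proof.
move=> vN F2N vF1 vF2 Heq; apply/andP; split.
  apply/subsetP => x xF2; rewrite in_setD1 (subsetP F2N x xF2) andbT.
  by apply/negP => /eqP xv; move: vF2; rewrite -xv xF2.
apply/allP => p pP; apply/implyP => vp.
have : p \in paths_through P F1.
  rewrite /paths_through mem_filter pP andbT; apply/hasP; by exists v.
by rewrite Heq /paths_through mem_filter => /andP [].
Qed.

Theorem corollary7 (V : finType) (e : rel V) (M : {set V})
  (P : seq (seq V)) (k : nat) (S : {set V}) :
  undirected_graph e -> connected_graph e ->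
  uniq P -> (forall p, p \in P -> measurement_path e M p) ->
  1 <= k -> k <= #|nonmon M| - 1 ->
  max_k_identifiable M P k S ->
  S_inner M P k \subset S /\ S \subset S_outer M P k.
Proof.
move=> _ _ _ _ k1 kN [SN [Sid Smax]]; split.
- apply/subsetP => v; rewrite inE => /andP [vN hv].
  have key : forall F1 F2 : {set V}, F2 \subset nonmon M -> #|F2| <= k ->
      v \in F1 -> v \notin F2 -> distinguishable P F1 F2.
    move=> F1 F2 F2N F2k vF1 vF2 Heq.
    have := @MSC_le V M P v F2 (@cover_of V M P v F1 F2 vN F2N vF1 vF2 Heq).
    move=> h; have := leq_trans hv (leq_trans h F2k); by rewrite ltnn.
  have id' : k_identifiable M P k (v |: S).
    move=> F1 F2 F1N F2N F1k F2k Hne.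
    case: (boolP (F1 :&: S == F2 :&: S)) => HS; last exact: Sid.
    case v1: (v \in F1); case v2: (v \in F2).
    + exfalso; move: Hne; apply/negP; rewrite negbK; apply/eqP/setP => x.
      move/eqP/setP: HS => /(_ x); rewrite !inE.
      case: (eqVneq x v) => [->|_] /=; by rewrite ?v1 ?v2.
    + by apply: key => //; rewrite v2.
    + move=> H; apply: (key F2 F1) => //; by rewrite ?v1.
    + exfalso; move: Hne; apply/negP; rewrite negbK; apply/eqP/setP => x.
      move/eqP/setP: HS => /(_ x); rewrite !inE.
      case: (eqVneq x v) => [->|_] /=; by rewrite ?v1 ?v2.
  have sub : v |: S \subset nonmon M by rewrite subUset sub1set vN SN.
  have := Smax _ sub id'.
  rewrite cardsU1; case: (boolP (v \in S)) => // _.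
  by rewrite add1n ltnn.
- apply/subsetP => v vS; have vN := subsetP SN v vS.
  rewrite inE vN /=; rewrite leqNgt; apply/negP => hlt.
  have hlt' : MSC M P v < #|nonmon M|.
    apply: (leq_trans hlt); apply: (leq_trans kN); exact: leq_subr.
  have [V' [cov cardV']] := @MSC_attained V M P v hlt'.
  move: (cov) => /andP [V'sub /allP Hall].
  have vV' : v \notin V'.
    apply/negP => /(subsetP V'sub); by rewrite !inE eqxx.
  have V'N : V' \subset nonmon M.
    apply/subsetP => x /(subsetP V'sub); rewrite !inE; by case/andP.
  apply: (Sid (v |: V') V').
  + by rewrite subUset sub1set vN V'N.
  + exact V'N.
  + rewrite cardsU1 vV' cardV' add1n; exact: hlt.
  + rewrite cardV'; exact: ltnW.
  + apply/negP => /eqP /setP /(_ v); rewrite !inE eqxx vS /=.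
    by rewrite (negbTE vV').
  + rewrite /paths_through; apply: eq_in_filter => p pP.
    apply/hasP/hasP => [[x xp]|[x xp xV]]; last by exists x; rewrite // inE xV orbT.
    rewrite in_setU1 => /orP [/eqP xv|xV]; last by exists x.
    have := Hall p pP; rewrite -xv xp /= => /hasP h; exact h.
Qed.
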